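(* Let $G=(V_G,E_G)$ and $H=(V_H,E_H)$ be two vertex-disjoint digraphs. Then: 1. $\mathrm{dpw}(G\oplus H)=\max\{\mathrm{dpw}(G),\mathrm{dpw}(H)\}$; 2. $\mathrm{dpw}(G\oslash H)=\max\{\mathrm{dpw}(G),\mathrm{dpw}(H)\}$; 3. for every directed union $G\ominus H$ of $G$ and $H$, $\mathrm{dpw}(G\ominus H)=\max\{\mathrm{dpw}(G),\mathrm{dpw}(H)\}$; 4. $\mathrm{dpw}(G\otimes H)=\min\{\mathrm{dpw}(G)+|V_H|,\ \mathrm{dpw}(H)+|V_G|\}$.
   Context: Digraphs are finite, without loops or multiple arcs; arcs are ordered pairs $(u,v)$ with $u\neq v$. A directed path-decomposition of a digraph $G=(V,E)$ is a sequence $(X_1,\ldots,X_r)$ of subsets of $V$ (bags) such that: (i) $X_1\cup\cdots\cup X_r=V$; (ii) for each $(u,v)\in E$ there are $i\le j$ with $u\in X_i$, $v\in X_j$; (iii) if $u\in X_i$ and $u\in X_j$ with $i\le j$, then $u\in X_\ell$ for all $i\le \ell\le j$. Its width is $\max_i |X_i|-1$, and the directed path-width $\mathrm{dpw}(G)$ is the minimum width of a directed path-decomposition of $G$. For vertex-disjoint digraphs $G=(V_G,E_G)$, $H=(V_H,E_H)$: the disjoint union $G\oplus H$ has vertex set $V_G\cup V_H$ and arc set $E_G\cup E_H$; the series composition $G\otimes H$ is $G\oplus H$ plus all arcs $(u,v)$ and $(v,u)$ with $u\in V_G$, $v\in V_H$; the order composition $G\oslash H$ is $G\oplus H$ plus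 all arcs $(u,v)$ with $u\in V_G$, $v\in V_H$; a directed union $G\ominus H$ is any digraph on $V_G\cup V_H$ obtained from $G\oplus H$ by adding some (possibly none or all) arcs $(u,v)$ with $u\in V_G$, $v\in V_H$ (so $G,H$ are induced subdigraphs and there is no arc from $V_H$ to $V_G$). *)

(* Defs.v *)
(* Digraphs on a finite vertex type T, arcs given by a
   boolean relation E : rel T (loops excluded by an irreflexivity hypothesis
   where needed). *)
From mathcomp Require Import all_boot.
From Stdlib Require Import ClassicalEpsilon.

Set Implicit Arguments.
Unset Strict Implicit.
Unset Printing Implicit Defensive.

Section DPW.
Variable T : finType.

Definition is_dpd (E : rel T) (s : seq {set T}) : Prop :=
  [/\ (\bigcup_(X <- s) X) = [set: T],
      (forall u v, E u v -> exists i j, [/\ i <= j, j < size s,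
                        u \in nth set0 s i & v \in nth set0 s j]) &
      (forall u i j l, i <= l -> l <= j -> j < size s ->
          u \in nth set0 s i -> u \in nth set0 s j -> u \in nth set0 s l)].

Definition dpd_width (s : seq {set T}) : nat := (\max_(X <- s) #|X|).-1.

Definition has_dpd_of_width (E : rel T) (k : nat) : Prop :=
  exists s, is_dpd E s /\ dpd_width s = k.

Definition pbool (P : Prop) : bool :=
  if excluded_middle_informative P then true else false.

Lemma has_dpd_exists (E : rel T) : exists k, pbool (has_dpd_of_width E k).
Proof.
exists (dpd_width [:: [set: T]]).
rewrite /pbool; case: excluded_middle_informative => // [[]].
exists [:: [set: T]]; split => //; split.
- by rewrite big_seq1.
- by move=> u v _; exists 0, 0; rewrite !in_setT.
- by move=> u [|i] [|j] [|l] //=.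
Qed.

Definition dpw (E : rel T) : nat := ex_minn (has_dpd_exists E).
End DPW.

Section Compositions.
Variables T1 T2 : finType.
Variables (E1 : rel T1) (E2 : rel T2).

Definition disj_union : rel (T1 + T2) := fun x y =>
  match x, y with
  | inl a, inl b => E1 a b
  | inr a, inr b => E2 a b
  | _, _ => false
  end.

Definition series_comp : rel (T1 + T2) := fun x y =>
  match x, y with
  | inl a, inl b => E1 a b
  | inr a, inr b => E2 a b
  | _, _ => true
  end.

Definition order_comp : rel (T1 + T2) := fun x y =>
  match x, y with
  | inl a, inl b => E1 a b
  | inr a, inr b => E2 a b
  | inl _, inr _ => true
  | inr _, inl _ => false
  end.

Definition is_directed_union (F : rel (T1 + T2)) : Prop :=
  [/\ forall a b, F (inl a) (inl b) = E1 a b,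
      forall a b, F (inr a) (inr b) = E2 a b &
      forall a b, F (inr a) (inl b) = false].
End Compositions.

(* Main.v *)
Require Import Defs.
From mathcomp Require Import all_boot zify.
From Stdlib Require Import ClassicalEpsilon.

Set Implicit Arguments.
Unset Strict Implicit.
Unset Printing Implicit Defensive.

Lemma pboolP (P : Prop) : pbool P = true <-> P.
Proof. by rewrite /pbool; case: excluded_middle_informative. Qed.

Lemma dpw_spec (T : finType) (E : rel T) :
  exists s, is_dpd E s /\ dpd_width s = dpw E.
Proof.
rewrite /dpw; case: ex_minnP => m /pboolP [s [hs hw]] _.
by exists s.
Qed.

Lemma dpw_min (T : finType) (E : rel T) s : is_dpd E s -> dpw E <= dpd_width s.
Proof.
move=> hs; rewrite /dpw; case: ex_minnP => m _ hmin; apply: hmin.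
by apply/pboolP; exists s.
Qed.

Lemma mem_bigcup_seq (T : finType) (s : seq {set T}) v :
  (v \in \bigcup_(X <- s) X) = has (fun X : {set T} => v \in X) s.
Proof.
elim: s => [|X s IH]; first by rewrite big_nil in_set0.
by rewrite big_cons in_setU IH.
Qed.

Lemma nth_size (T : finType) (s : seq {set T}) v i :
  v \in nth set0 s i -> i < size s.
Proof. by rewrite ltnNge; apply: contraL => h; rewrite nth_default ?in_set0. Qed.

Lemma cover_nth (T : finType) (s : seq {set T}) :
  (\bigcup_(X <- s) X) = [set: T] -> forall v, exists i, v \in nth set0 s i.
Proof.
move=> h v; have : v \in \bigcup_(X <- s) X by rewrite h in_setT.
rewrite mem_bigcup_seq => /(has_nthP set0) [i _ hi]; by exists i.
Qed.

Lemma nth_cover (T : finType) (s : seq {set T}) :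
  (forall v, exists i, v \in nth set0 s i) -> (\bigcup_(X <- s) X) = [set: T].
Proof.
move=> h; apply/setP => v; rewrite in_setT mem_bigcup_seq.
case: (h v) => i hi; apply/(has_nthP set0); exists i => //; exact: nth_size hi.
Qed.

Lemma between (T : finType) (E : rel T) s v x y l :
  is_dpd E s -> v \in nth set0 s x -> v \in nth set0 s y ->
  minn x y <= l -> l <= maxn x y -> v \in nth set0 s l.
Proof.
case=> _ _ hc hx hy h1 h2.
have := nth_size hx; have := nth_size hy => sy sx.
case: (leqP x y) => hxy.
- apply: (hc v x y l) => //; lia.
- apply: (hc v y x l) => //; lia.
Qed.

Lemma window (T T' : finType) (F : rel T) (E' : rel T') (s : seq {set T})
    (f : T' -> T) (C : {set T}) q p (a0 : T') :
  is_dpd F s -> injective f -> (forall a b, E' a b -> F (f a) (f b)) ->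
  p < size s -> (forall l, q <= l -> l <= p -> C \subset nth set0 s l) ->
  (forall a, f a \notin C) ->
  (forall a, exists l, [/\ q <= l, l <= p & f a \in nth set0 s l]) ->
  dpw E' + #|C| <= dpd_width s.
Proof.
move=> hs finj hE hp hC hCf hwin.
pose s' := mkseq (fun k => f @^-1: nth set0 s (q + k)) (p.+1 - q).
have ns' : forall a k, (a \in nth set0 s' k) = (k < p.+1 - q) && (f a \in nth set0 s (q + k)).
  move=> a k; rewrite /s'; case: (ltnP k (p.+1 - q)) => hk /=.
    by rewrite nth_mkseq // inE.
  by rewrite nth_default ?size_mkseq // in_set0.
have hs' : is_dpd E' s'.
  case: (hs) => hcov harc hconv.
  split.
  - apply: nth_cover => a; case: (hwin a) => l [h1 h2 h3].
    exists (l - q); rewrite ns'; apply/andP; split; first lia.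
    by rewrite subnKC.
  - move=> a b /hE /harc [i [j [hij hj hi' hj']]].
    case: (hwin a) => la [la1 la2 la3]; case: (hwin b) => lb [lb1 lb2 lb3].
    exists (maxn q (minn i p) - q), (maxn q (minn j p) - q).
    rewrite size_mkseq !ns'; split; try lia.
    + apply/andP; split; first lia.
      have -> : q + (maxn q (minn i p) - q) = maxn q (minn i p) by lia.
      apply: (between hs hi' la3); lia.
    + apply/andP; split; first lia.
      have -> : q + (maxn q (minn j p) - q) = maxn q (minn j p) by lia.
      apply: (between hs hj' lb3); lia.
  - move=> a i j l h1 h2 hj; rewrite !ns' => /andP [_ hi] /andP [hj' hjj].
    apply/andP; split; first lia.
    apply: (hconv _ (q + i) (q + j)) => //; lia.
have hd := dpw_min hs'.
have hb : \max_(X <- s') #|X| <= \max_(X <- s) #|X| - #|C|.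
  apply/bigmax_leqP_seq => X /(nthP set0) [k hk <-] _.
  have hk' : k < p.+1 - q by rewrite size_mkseq in hk.
  rewrite /s' nth_mkseq //.
  set Y := nth set0 s (q + k).
  have hY : #|Y| <= \max_(X <- s) #|X|.
    apply: leq_bigmax_seq => //; apply: mem_nth; apply: (leq_trans _ hp); lia.
  have hCY : C \subset Y :\: f @: (f @^-1: Y).
    apply/subsetP => c hc; rewrite in_setD.
    have -> : c \in Y by apply: (subsetP (hC (q + k) _ _)) => //; lia.
    rewrite andbT; apply/imsetP => [[a _ ha]]; by move: (hCf a); rewrite -ha hc.
  have hsub : f @: (f @^-1: Y) \subset Y.
    apply/subsetP => y /imsetP [a]; rewrite inE => ha ->; done.
  have hpY := subset_leq_card hsub.
  have := subset_leq_card hCY; rewrite cardsD.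
  have -> : Y :&: f @: (f @^-1: Y) = f @: (f @^-1: Y) by apply/setIidPr.
  rewrite card_imset // in hpY * => h; lia.
have hpos : 0 < \max_(X <- s') #|X|.
  case: (hs') => hcov _ _; case: (cover_nth hcov a0) => k hk.
  have hkk := nth_size hk.
  apply: (leq_trans _ (leq_bigmax_seq (nth set0 s' k) (mem_nth set0 hkk) isT)).
  by apply/card_gt0P; exists a0.
move: hd hb hpos; rewrite /dpd_width; lia.
Qed.

Lemma restrict (T T' : finType) (F : rel T) (E' : rel T') (s : seq {set T})
    (f : T' -> T) :
  is_dpd F s -> injective f -> (forall a b, E' a b -> F (f a) (f b)) ->
  dpw E' <= dpd_width s.
Proof.
move=> hs finj hE.
case: (pickP (predT : pred T')) => [a0 _ | hemp].
- case: (hs) => hcov _ _.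
  have [i0 hi0] := cover_nth hcov (f a0).
  have hn := nth_size hi0.
  have := @window T T' F E' s f set0 0 (size s).-1 a0 hs finj hE.
  rewrite cards0 addn0; apply.
  + lia.
  + by move=> *; apply: sub0set.
  + by move=> a; rewrite in_set0.
  + move=> a; have [l hl] := cover_nth hcov (f a); exists l; split => //.
    have := nth_size hl; lia.
- have : dpw E' <= dpd_width ([::] : seq {set T'}).
    apply: dpw_min; split.
    + by rewrite big_nil; apply/setP => x; have := hemp x.
    + by move=> u; have := hemp u.
    + by move=> u [|i] [|j] [|l] //=.
  by rewrite /dpd_width big_nil /= leqn0 => /eqP ->.
Qed.

Lemma nth_map0 (A B : finType) (g : {set A} -> {set B}) s i :
  g set0 = set0 -> nth set0 (map g s) i = g (nth set0 s i).
Proof.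
move=> h; elim: s i => [|x s IH] i; first by rewrite !nth_nil h.
by case: i.
Qed.

Lemma inl_inj (T1 T2 : finType) : injective (@inl T1 T2).
Proof. by move=> x y []. Qed.
Lemma inr_inj (T1 T2 : finType) : injective (@inr T1 T2).
Proof. by move=> x y []. Qed.

Section Concat.
Variables (T1 T2 : finType) (E1 : rel T1) (E2 : rel T2) (F : rel (T1 + T2)).
Hypothesis hF : is_directed_union E1 E2 F.

Lemma concat_upper : dpw F <= maxn (dpw E1) (dpw E2).
Proof.
have [s1 [hs1 hw1]] := dpw_spec E1.
have [s2 [hs2 hw2]] := dpw_spec E2.
case: hF => hF1 hF2 hF3.
pose s := map (fun X : {set T1} => (@inl T1 T2) @: X) s1 ++ map (fun X : {set T2} => (@inr T1 T2) @: X) s2.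
have L1 : forall a i, (inl a \in nth set0 s i) = (a \in nth set0 s1 i).
  move=> a i; rewrite /s nth_cat size_map; case: ltnP => h.
    by rewrite (nth_map set0) // mem_imset //; exact: inl_inj.
  rewrite nth_map0 ?imset0 // (nth_default _ h) in_set0.
  by apply/imsetP => [[b _ //]].
have L2 : forall b i, (inr b \in nth set0 s i) =
    (size s1 <= i) && (b \in nth set0 s2 (i - size s1)).
  move=> b i; rewrite /s nth_cat size_map; case: ltnP => h /=.
    rewrite (nth_map set0) //; by apply/imsetP => [[a _ //]].
  by rewrite nth_map0 ?imset0 // mem_imset //; exact: inr_inj.
have hsz : size s = size s1 + size s2 by rewrite size_cat !size_map.
case: (hs1) => c1 a1 v1; case: (hs2) => c2 a2 v2.
have hs : is_dpd F s.
  split.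
  - apply: nth_cover => [[a|b]].
    + have [i hi] := cover_nth c1 a; exists i; by rewrite L1.
    + have [j hj] := cover_nth c2 b; exists (size s1 + j).
      by rewrite L2 leq_addr addKn.
  - move=> [a|a] [b|b]; rewrite ?hF1 ?hF2 ?hF3 //.
    + move=> /a1 [i [j [hij hj hi hj']]]; exists i, j; rewrite !L1; split => //.
      rewrite hsz; lia.
    + move=> _; have [i hi] := cover_nth c1 a; have [j hj] := cover_nth c2 b.
      have := nth_size hi; have := nth_size hj => h1 h2.
      exists i, (size s1 + j); rewrite L1 L2 leq_addr addKn; split => //; lia.
    + move=> /a2 [i [j [hij hj hi hj']]]; exists (size s1 + i), (size s1 + j).
      rewrite !L2 !leq_addr !addKn; split => //; lia.
  - move=> [a|b] i j l h1 h2 h3.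
    + rewrite !L1 => hi hj; apply: (v1 a i j) => //; exact: nth_size hj.
    + rewrite !L2 => /andP [hi hbi] /andP [hj hbj].
      apply/andP; split; first lia.
      apply: (v2 b (i - size s1) (j - size s1)) => //; lia.
have := dpw_min hs.
have -> : dpd_width s = maxn (dpd_width s1) (dpd_width s2).
  rewrite /dpd_width /s big_cat !big_map.
  have e1 : \max_(j <- s1) #|(@inl T1 T2) @: j| = \max_(j <- s1) #|j|.
    by apply: eq_bigr => X _; rewrite card_imset //; exact: inl_inj.
  have e2 : \max_(j <- s2) #|(@inr T1 T2) @: j| = \max_(j <- s2) #|j|.
    by apply: eq_bigr => X _; rewrite card_imset //; exact: inr_inj.
  rewrite e1 e2; have hm : forall a b, (maxn a b).-1 = maxn a.-1 b.-1 by lia.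
  exact: hm.
by rewrite hw1 hw2.
Qed.

Lemma concat_lower : maxn (dpw E1) (dpw E2) <= dpw F.
Proof.
have [s [hs hw]] := dpw_spec F.
case: hF => hF1 hF2 hF3.
rewrite geq_max -hw; apply/andP; split.
- apply: (restrict hs (@inl_inj T1 T2)) => a b; by rewrite hF1.
- apply: (restrict hs (@inr_inj T1 T2)) => a b; by rewrite hF2.
Qed.

End Concat.

Lemma series_upper (T1 T2 : finType) (E1 : rel T1) (E2 : rel T2) :
  dpw (series_comp E1 E2) <= dpw E1 + #|T2|.
Proof.
have [s1 [hs1 hw1]] := dpw_spec E1.
case: (hs1) => c1 a1 v1.
pose B (X : {set T1}) : {set T1 + T2} := (@inl T1 T2) @: X :|: (@inr T1 T2) @: [set: T2].
pose s := map B (set0 :: s1).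
have hsz : size s = (size s1).+1 by rewrite size_map.
have M1 : forall a i, (inl a \in nth set0 s i) = (a \in nth set0 (set0 :: s1) i).
  move=> a i; case: (ltnP i (size s)) => h.
    rewrite (nth_map (set0 : {set T1})); last by rewrite /= -hsz.
    rewrite /B in_setU mem_imset; last exact: inl_inj.
    have -> : (inl a \in (@inr T1 T2) @: [set: T2]) = false by apply/imsetP => -[b _].
    by rewrite orbF.
  rewrite (nth_default _ h) in_set0 nth_default ?in_set0 //; by move: h; rewrite hsz.
have M2 : forall b i, (inr b \in nth set0 s i) = (i < size s).
  move=> b i; case: (ltnP i (size s)) => h.
    rewrite (nth_map (set0 : {set T1})); last by rewrite /= -hsz.
    rewrite /B in_setU mem_imset ?in_setT ?orbT //; exact: inr_inj.
  by rewrite nth_default ?in_set0.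
have hcov : forall v, exists i, v \in nth set0 s i.
  move=> [a|b].
  - have [i hi] := cover_nth c1 a; exists i.+1; by rewrite M1.
  - exists 0; by rewrite M2 hsz.
have hs : is_dpd (series_comp E1 E2) s.
  split.
  - exact: nth_cover.
  - move=> [a|a] [b|b] /=.
    + move=> /a1 [i [j [hij hj hi hj']]]; exists i.+1, j.+1; rewrite !M1 size_map; split => //.
    + move=> _; have [i hi] := hcov (inl a); exists i, i; rewrite M2; split => //; exact: nth_size hi.
    + move=> _; have [i hi] := hcov (inl b); exists i, i; rewrite M2; split => //; exact: nth_size hi.
    + move=> _; exists 0, 0; rewrite !M2; split => //; rewrite ?hsz ?size_map //.
  - move=> [a|b] i j l h1 h2 h3.
    + rewrite !M1; case: i h1 => [|i] h1; first by rewrite /= in_set0.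
      case: l h1 h2 => [|l] h1 h2 //; case: j h2 h3 => [|j] h2 h3 //.
      rewrite /= => hi hj.
      apply: (v1 a i j) => //; exact: nth_size hj.
    + by rewrite !M2 => _ _; apply: leq_ltn_trans h3.
have := dpw_min hs.
have hb : \max_(X <- s) #|X| <= \max_(X <- s1) #|X| + #|T2|.
  apply/bigmax_leqP_seq => X /mapP [Y hY ->] _.
  apply: (leq_trans (leq_card_setU _ _)); apply: leq_add.
  - rewrite card_imset; last exact: inl_inj.
    move: hY; rewrite inE => /orP [/eqP ->|hY]; first by rewrite cards0.
    exact: leq_bigmax_seq.
  - rewrite card_imset ?cardsT //; exact: inr_inj.
have key : forall m m1 t d, m <= m1 + t -> d <= m.-1 -> d <= m1.-1 + t by lia.
rewrite -hw1 => hd; exact: (key _ _ _ _ hb hd).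
Qed.

Definition swap (T1 T2 : finType) (x : T1 + T2) : T2 + T1 :=
  match x with inl a => inr a | inr b => inl b end.

Lemma swap_inj (T1 T2 : finType) : injective (@swap T1 T2).
Proof. by move=> [a|a] [b|b] //= [->]. Qed.

Lemma series_swap (T1 T2 : finType) (E1 : rel T1) (E2 : rel T2) :
  dpw (series_comp E1 E2) <= dpw (series_comp E2 E1).
Proof.
have [s [hs hw]] := dpw_spec (series_comp E2 E1).
rewrite -hw; apply: (restrict hs (@swap_inj T1 T2)).
by move=> [a|a] [b|b].
Qed.

Lemma series_lower (T1 T2 : finType) (E1 : rel T1) (E2 : rel T2) :
  minn (dpw E1 + #|T2|) (dpw E2 + #|T1|) <= dpw (series_comp E1 E2).
Proof.
have [s [hs hw]] := dpw_spec (series_comp E1 E2).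
case: (hs) => hcov harc hconv.
case: (pickP (predT : pred T1)) => [g0 _|e1]; last first.
  have -> : #|T1| = 0 by apply: eq_card0 => x; have := e1 x.
  have : dpw E2 <= dpw (series_comp E1 E2).
    rewrite -hw; apply: (restrict hs (@inr_inj T1 T2)) => a b; by [].
  rewrite addn0; move=> h; apply: leq_trans h; exact: geq_minr.
case: (pickP (predT : pred T2)) => [h0 _|e2]; last first.
  have -> : #|T2| = 0 by apply: eq_card0 => x; have := e2 x.
  have : dpw E1 <= dpw (series_comp E1 E2).
    rewrite -hw; apply: (restrict hs (@inl_inj T1 T2)) => a b; by [].
  rewrite addn0; move=> h; apply: leq_trans h; exact: geq_minl.
pose lo v := find (fun X : {set T1 + T2} => v \in X) s.
have lo_in : forall v, v \in nth set0 s (lo v).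
  move=> v; have [i hi] := cover_nth hcov v.
  apply: (@nth_find _ set0 (fun X : {set T1 + T2} => v \in X)); apply/(has_nthP set0); exists i => //; exact: nth_size hi.
have lo_min : forall v i, v \in nth set0 s i -> lo v <= i.
  move=> v i hi; rewrite leqNgt; apply/negP => h.
  by have := before_find set0 h; rewrite hi.
pose hi v := \max_(i in [pred i : 'I_(size s) | v \in nth set0 s i]) (i : nat).
have hi_max : forall v i, v \in nth set0 s i -> i <= hi v.
  move=> v i hvi; have hn := nth_size hvi.
  by apply: (leq_bigmax_cond (Ordinal hn)); rewrite inE.
have hi_in : forall v, hi v < size s /\ v \in nth set0 s (hi v).
  move=> v; have [i hvi] := cover_nth hcov v; have hn := nth_size hvi.
  have : 0 < #|[pred i : 'I_(size s) | v \in nth set0 s i]|.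
    by apply/card_gt0P; exists (Ordinal hn); rewrite inE.
  case/(eq_bigmax_cond (fun i : 'I_(size s) => nat_of_ord i)) => i0 hi0 e.
  rewrite /hi e; split; [exact: ltn_ord | by move: hi0; rewrite inE].
have conv : forall v l, lo v <= l -> l <= hi v -> v \in nth set0 s l.
  move=> v l h1 h2; case: (hi_in v) => hn hv.
  exact: (hconv v (lo v) (hi v) l h1 h2 hn (lo_in v) hv).
have lohi : forall v, lo v <= hi v by move=> v; apply: lo_min; case: (hi_in v).
have [z _ hz] := @arg_maxnP T2 h0 predT (fun h => lo (inr h)) isT.
have [y _ hy] := @arg_minnP T2 h0 predT (fun h => hi (inr h)) isT.
set p := lo (inr z); set q := hi (inr y).
have hlo_g : forall g, lo (inl g) <= q.
  move=> g; have [i [j [hij hj hgi hyj]]] := harc (inl g) (inr y) isT.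
  have := lo_min _ _ hgi; have := hi_max _ _ hyj; rewrite -/q; lia.
have hhi_g : forall g, p <= hi (inl g).
  move=> g; have [i [j [hij hj hzi hgj]]] := harc (inr z) (inl g) isT.
  have := lo_min _ _ hzi; have := hi_max _ _ hgj; rewrite -/p; lia.
rewrite -hw.
case: (leqP p q) => hpq.
- have := @window (T1 + T2)%type T1 (series_comp E1 E2) E1 s (@inl T1 T2)
      ((@inr T1 T2) @: [set: T2]) p q g0 hs (@inl_inj T1 T2) (fun a b h => h).
  rewrite card_imset ?cardsT; last exact: inr_inj.
  move=> H; apply: (leq_trans (geq_minl _ _)); apply: H.
  + by case: (hi_in (inr y)).
  + move=> l h1 h2; apply/subsetP => x /imsetP [h _ ->]; apply: conv.
    * have := hz h isT; rewrite -/p /=; lia.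
    * have := hy h isT; rewrite -/q /=; lia.
  + by move=> a; apply/imsetP => -[b _].
  + move=> a; exists (maxn (lo (inl a)) p); split.
    * exact: leq_maxr.
    * have := hlo_g a; lia.
    * apply: conv; first exact: leq_maxl.
      have := hhi_g a; have := lohi (inl a); lia.
- have := @window (T1 + T2)%type T2 (series_comp E1 E2) E2 s (@inr T1 T2)
      ((@inl T1 T2) @: [set: T1]) q p h0 hs (@inr_inj T1 T2) (fun a b h => h).
  rewrite card_imset ?cardsT; last exact: inl_inj.
  move=> H; apply: (leq_trans (geq_minr _ _)); apply: H.
  + exact: nth_size (lo_in (inr z)).
  + move=> l h1 h2; apply/subsetP => x /imsetP [g _ ->]; apply: conv.
    * have := hlo_g g; lia.
    * have := hhi_g g; lia.
  + by move=> a; apply/imsetP => -[b _].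
  + move=> a; exists (maxn (lo (inr a)) q); split.
    * exact: leq_maxr.
    * have := hz a isT; rewrite -/p /=; lia.
    * apply: conv; first exact: leq_maxl.
      have := hy a isT; have := lohi (inr a); rewrite -/q /=; lia.
Qed.

Theorem theorem3p8 (T1 T2 : finType) (E1 : rel T1) (E2 : rel T2)
    (irrE1 : irreflexive E1) (irrE2 : irreflexive E2) :
  [/\ dpw (disj_union E1 E2) = maxn (dpw E1) (dpw E2),
      dpw (order_comp E1 E2) = maxn (dpw E1) (dpw E2),
      (forall F : rel (T1 + T2), is_directed_union E1 E2 F ->
         dpw F = maxn (dpw E1) (dpw E2)) &
      dpw (series_comp E1 E2) = minn (dpw E1 + #|T2|) (dpw E2 + #|T1|)].
Proof.
have P3 : forall F : rel (T1 + T2), is_directed_union E1 E2 F ->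
    dpw F = maxn (dpw E1) (dpw E2).
  move=> F hF; apply/eqP; rewrite eqn_leq concat_upper //; exact: concat_lower.
split.
- by apply: P3; split.
- by apply: P3; split.
- exact: P3.
- apply/eqP; rewrite eqn_leq series_lower andbT leq_min series_upper /=.
  apply: leq_trans (series_swap E1 E2) _; exact: series_upper.
Qed.
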